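(* Let $g$ be a continuous function on $[a,b]$ which is DC on $(a,b)$, and let $P\subset[a,b]$ be a nowhere dense set. Then the set $g(P)$ is nowhere dense in $\mathbb{R}$.
   Context: A function on an open interval is DC if it is the difference of two convex functions on that interval. *)

(* Defs.v *)
From HB Require Import structures.
From mathcomp Require Import all_boot all_order all_algebra.
From mathcomp Require Import all_classical all_reals all_analysis.
Set Implicit Arguments. Unset Strict Implicit. Unset Printing Implicit Defensive.
Import Order.TTheory GRing.Theory Num.Theory numFieldNormedType.Exports.
Local Open Scope classical_set_scope.
Local Open Scope ring_scope.

Definition convex_on (R : realType) (I : set R) (f : R -> R) : Prop :=
  forall x y t, I x -> I y -> 0 <= t -> t <= 1 ->
    f (t * x + (1 - t) * y) <= t * f x + (1 - t) * f y.

Definition DC_on (R : realType) (I : set R) (g : R -> R) : Prop :=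
  exists g1 g2 : R -> R, convex_on I g1 /\ convex_on I g2 /\
    forall x, I x -> g x = g1 x - g2 x.

Definition nowhere_dense (T : topologicalType) (A : set T) : Prop :=
  interior (closure A) = set0.

(* Main.v *)
Require Import Defs.
From HB Require Import structures.
From mathcomp Require Import all_boot all_order all_algebra.
From mathcomp Require Import all_classical all_reals all_analysis.
From mathcomp Require Import ring lra.
Import Order.TTheory GRing.Theory Num.Theory numFieldNormedType.Exports.
Local Open Scope classical_set_scope.
Local Open Scope ring_scope.

Lemma conv_key {R : realType} {a b : R} {f : R -> R} {p q r : R} :
  convex_on `]a, b[ f -> a < p -> p < q -> q < r -> r < b ->
  (r - p) * f q <= (r - q) * f p + (q - p) * f r.
Proof.
move=> cf ap pq qr rb.
have rp : 0 < r - p by lra.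
set t := (r - q) / (r - p).
have t0 : 0 <= t by apply: divr_ge0; lra.
have t1 : t <= 1 by rewrite ler_pdivrMr //; lra.
have e : t * p + (1 - t) * r = q.
  rewrite /t; field; lra.
have Ip : p \in `]a, b[ by rewrite in_itv /=; apply/andP; split; lra.
have Ir : r \in `]a, b[ by rewrite in_itv /=; apply/andP; split; lra.
have := cf p r t Ip Ir t0 t1; rewrite e => H.
have -> : (r - q) * f p + (q - p) * f r = (r - p) * (t * f p + (1 - t) * f r).
  rewrite /t; field; lra.
by rewrite ler_pM2l.
Qed.

Lemma conv_right {R : realType} (a b : R) (f : R -> R) (x e : R) :
  convex_on `]a, b[ f -> a < x -> x < b -> 0 < e ->
  exists d, [/\ 0 < d, x + d < b & exists m, forall p q, x <= p -> p < q -> q <= x + d ->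
     m * (q - p) <= f q - f p /\ f q - f p <= (m + e) * (q - p)].
Proof.
move=> cf ax xb e0.
set x0 := (a + x) / 2.
have ax0 : a < x0 by rewrite /x0; lra.
have x0x : x0 < x by rewrite /x0; lra.
set s := (f x - f x0) / (x - x0).
have es : s * (x - x0) = f x - f x0 by rewrite /s; field; lra.
set S := [set y | exists2 t : R, 0 < t /\ x + t < b & y = (f (x + t) - f x) / t].
have lbS : forall y, S y -> s <= y.
  move=> y [t [t0 xtb] ->].
  have K := conv_key cf ax0 x0x (_ : x < x + t) xtb.
  have {}K := K ltac:(lra).
  rewrite ler_pdivlMr //.
  rewrite -(ler_pM2r (_ : 0 < x - x0)); last lra.
  have -> : s * t * (x - x0) = t * (f x - f x0) by rewrite -es; ring.
  lra.
have hS : has_inf S.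
  split; last by exists s => y /lbS.
  exists ((f (x + (b - x) / 2) - f x) / ((b - x) / 2)).
  by exists ((b - x) / 2); [split; lra|].
set m := inf S.
have sm : s <= m by apply: lb_le_inf; [case: hS|move=> y /lbS].
have mS : forall y, S y -> m <= y by move=> y Sy; exact: (ge_inf (proj2 hS) Sy).
have e20 : 0 < e / 2 by lra.
have [y0 [t0 [t00 xt0b] ey0] y0m] := inf_adherent e20 hS.
have sy0 : s <= y0 by apply: lbS; exists t0.
have ey0' : y0 * t0 = f (x + t0) - f x by rewrite ey0; field; lra.
have c0 : 0 < y0 - s + e by lra.
set d := Num.min (t0 / 2) (e / 2 * t0 / (y0 - s + e)).
have d0 : 0 < d.
  rewrite /d lt_min; apply/andP; split; first lra.
  by apply: divr_gt0 => //; apply: mulr_gt0.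
have dt0 : d <= t0 / 2 by rewrite /d ge_min lexx.
have dc : d * (y0 - s + e) <= e / 2 * t0.
  by rewrite -ler_pdivlMr // /d ge_min lexx orbT.
exists d; split => //; first lra.
have mSq : forall q, x < q -> q < b -> m <= (f q - f x) / (q - x).
  move=> q xq qb; have hq : x + (q - x) = q by ring.
  apply: mS; exists (q - x); first by split; lra.
  by rewrite hq.
exists m => p q xp pq qd.
split.
- have [xp'|] := eqVneq x p.
  + subst p.
    have : m <= (f q - f x) / (q - x) by apply: mSq; lra.
    by rewrite ler_pdivlMr //; lra.
  + move=> nxp; have {}xp : x < p by rewrite lt_neqAle nxp xp.
    have K := conv_key cf ax xp pq (_ : q < b).
    have {}K := K ltac:(lra).
    have : m <= (f q - f x) / (q - x) by apply: mSq; lra.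
    rewrite ler_pdivlMr; last lra.
    move=> H.
    rewrite -(ler_pM2r (_ : 0 < q - x)); last lra.
    have H2 : 0 <= (q - p) * (f q - f x - m * (q - x)) by apply: mulr_ge0; lra.
    nra.
- set w := x + t0.
  have pw : q < w by rewrite /w; lra.
  have K1 := conv_key cf (_ : a < p) pq pw (_ : w < b).
  have {}K1 := K1 ltac:(lra) ltac:(rewrite /w; lra).
  have F2 : f p - f x >= s * (p - x).
    have [xp'|] := eqVneq x p; first by subst p; lra.
    move=> nxp; have {}xp : x < p by rewrite lt_neqAle nxp xp.
    have K := conv_key cf ax0 x0x xp (_ : p < b).
    have {}K := K ltac:(lra).
    rewrite -(ler_pM2r (_ : 0 < x - x0)); last lra.
    have -> : s * (p - x) * (x - x0) = (p - x) * (f x - f x0) by rewrite -es; ring.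
    lra.
  have F3 : (m + e - s) * (p - x) <= e / 2 * t0.
    apply: le_trans dc.
    have my0 : m <= y0 by apply: mS; exists t0.
    have h1 : 0 <= (p - x) * (y0 - m) by apply: mulr_ge0; lra.
    have h2 : 0 <= (d - (p - x)) * (y0 - s + e) by apply: mulr_ge0; lra.
    lra.
  have F4 : f w - f p <= (m + e) * (w - p).
    rewrite /w.
    have : y0 * t0 <= (m + e / 2) * t0 by rewrite ler_pM2r //; lra.
    nra.
  rewrite -(ler_pM2r (_ : 0 < w - p)); last lra.
  have H2 : 0 <= (q - p) * ((m + e) * (w - p) - (f w - f p)) by apply: mulr_ge0; lra.
  nra.
Qed.

Lemma conv_left {R : realType} (a b : R) (f : R -> R) (x e : R) :
  convex_on `]a, b[ f -> a < x -> x < b -> 0 < e ->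
  exists d, [/\ 0 < d, a < x - d & exists m, forall p q, x - d <= p -> p < q -> q <= x ->
     m * (q - p) <= f q - f p /\ f q - f p <= (m + e) * (q - p)].
Proof.
move=> cf ax xb e0.
have ch : convex_on `]-b, -a[ (fun y => f (- y)).
  move=> y z t Iy Iz t0 t1.
  have Iy' : - y \in `]a, b[.
    by move: Iy; rewrite /= !in_itv /= => /andP[h1 h2]; rewrite ?bnd_simp in h1 h2; apply/andP; split; lra.
  have Iz' : - z \in `]a, b[.
    by move: Iz; rewrite /= !in_itv /= => /andP[h1 h2]; rewrite ?bnd_simp in h1 h2; apply/andP; split; lra.
  have := cf _ _ t Iy' Iz' t0 t1.
  by have -> : t * - y + (1 - t) * - z = - (t * y + (1 - t) * z) by ring.
have [d [d0 dlt [m Hm]]] := conv_right (-b) (-a) (fun y => f (- y)) (-x) e ch ltac:(lra) ltac:(lra) e0.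
exists d; split => //; first lra.
exists (- m - e) => p q pd pq qx.
have [] := Hm (- q) (- p) ltac:(lra) ltac:(lra) ltac:(lra).
rewrite !opprK => h1 h2; split; lra.
Qed.

Definition good {R : realType} (g : R -> R) (eta p q : R) : Prop :=
  (forall x y, p <= x -> x < y -> y <= q -> g x < g y) \/
  (forall x y, p <= x -> x < y -> y <= q -> g y < g x) \/
  (forall x y, p <= x -> x < y -> y <= q -> `|g y - g x| <= eta * (y - x)).

Lemma good_of_slopes {R : realType} (g : R -> R) (eta p q m : R) : 0 < eta ->
  (forall x y, p <= x -> x < y -> y <= q ->
     (m - eta / 2) * (y - x) <= g y - g x /\ g y - g x <= (m + eta / 2) * (y - x)) ->
  good g eta p q.
Proof.
move=> e0 H.
have [m1|m1] := ltP (eta / 2) m.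
  left => x y px xy yq; have [h1 h2] := H x y px xy yq.
  have : 0 < (m - eta / 2) * (y - x) by apply: mulr_gt0; lra.
  lra.
have [m2|m2] := ltP m (- (eta / 2)).
  right; left => x y px xy yq; have [h1 h2] := H x y px xy yq.
  have : 0 < (- (m + eta / 2)) * (y - x) by apply: mulr_gt0; lra.
  lra.
right; right => x y px xy yq; have [h1 h2] := H x y px xy yq.
have k1 : 0 <= (eta / 2 - m) * (y - x) by apply: mulr_ge0; lra.
have k2 : 0 <= (m + eta / 2) * (y - x) by apply: mulr_ge0; lra.
rewrite ler_norml; apply/andP; split; lra.
Qed.

Lemma dc_local {R : realType} (a b : R) (g : R -> R) (x eta : R) :
  DC_on `]a, b[ g -> a < x -> x < b -> 0 < eta ->
  exists d, [/\ 0 < d, a < x - d, x + d < b &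
    forall p q, (x - d <= p /\ q <= x) \/ (x <= p /\ q <= x + d) -> good g eta p q].
Proof.
move=> [g1 [g2 [c1 [c2 eg]]]] ax xb e0.
have e4 : 0 < eta / 4 by lra.
have [d1 [d10 d1b [m1 H1]]] := conv_right a b g1 x (eta / 4) c1 ax xb e4.
have [d2 [d20 d2b [m2 H2]]] := conv_right a b g2 x (eta / 4) c2 ax xb e4.
have [d3 [d30 d3b [m3 H3]]] := conv_left a b g1 x (eta / 4) c1 ax xb e4.
have [d4 [d40 d4b [m4 H4]]] := conv_left a b g2 x (eta / 4) c2 ax xb e4.
set d := Num.min (Num.min d1 d2) (Num.min d3 d4).
have dd1 : d <= d1 by rewrite /d !ge_min lexx.
have dd2 : d <= d2 by rewrite /d !ge_min lexx !orbT.
have dd3 : d <= d3 by rewrite /d !ge_min lexx !orbT.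
have dd4 : d <= d4 by rewrite /d !ge_min lexx !orbT.
have d0 : 0 < d by rewrite /d !lt_min d10 d20 d30 d40.
have egI : forall y, a < y -> y < b -> g y = g1 y - g2 y.
  by move=> y ay yb; apply: eg; rewrite /= in_itv /=; apply/andP; split.
exists d; split => //; [lra|lra|].
move=> p q [[pd qx]|[xp qd]].
- apply: (good_of_slopes g eta p q (m3 - m4)) => // u v pu uv vq.
  have [h1 h2] := H3 u v ltac:(lra) uv ltac:(lra).
  have [h3 h4] := H4 u v ltac:(lra) uv ltac:(lra).
  by rewrite !egI; lra.
- apply: (good_of_slopes g eta p q (m1 - m2)) => // u v pu uv vq.
  have [h1 h2] := H1 u v ltac:(lra) uv ltac:(lra).
  have [h3 h4] := H2 u v ltac:(lra) uv ltac:(lra).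
  by rewrite !egI; lra.
Qed.

Definition snd {R : realType} (F : set R) := forall u v : R, u < v ->
  exists u' v', [/\ u <= u', u' < v', v' <= v & forall y, u' < y -> y < v' -> ~ F y].

Lemma snd0 {R : realType} : snd (@set0 R).
Proof. by move=> u v uv; exists u, v; split => // y _ _. Qed.

Lemma sndS {R : realType} (F1 F2 : set R) : F1 `<=` F2 -> snd F2 -> snd F1.
Proof.
move=> s12 h u v uv; have [u' [v' [h1 h2 h3 h4]]] := h u v uv.
by exists u', v'; split => // y a b /s12; apply: h4.
Qed.

Lemma sndU {R : realType} (F1 F2 : set R) : snd F1 -> snd F2 -> snd (F1 `|` F2).
Proof.
move=> h1 h2 u v uv.
have [u1 [v1 [a1 a2 a3 a4]]] := h1 u v uv.
have [u2 [v2 [b1 b2 b3 b4]]] := h2 u1 v1 a2.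
exists u2, v2; split => //; [exact: le_trans b1|exact: le_trans a3|].
move=> y y1 y2 [].
- by apply: a4; lra.
- exact: b4.
Qed.

Lemma sndN {R : realType} (F : set R) : snd F -> snd (fun y => F (- y)).
Proof.
move=> h u v uv.
have [u' [v' [a1 a2 a3 a4]]] := h (- v) (- u) ltac:(lra).
exists (- v'), (- u'); split; [lra|lra|lra|].
move=> y y1 y2; apply: a4; lra.
Qed.

Lemma snd1 {R : realType} (z : R) : snd [set z].
Proof.
move=> u v uv.
have [zl|zl] := ltP z ((u + v) / 2).
  exists ((u + v) / 2), v; split; [lra|lra|lra|].
  by move=> y y1 y2 /= yz; lra.
exists u, ((u + v) / 2); split; [lra|lra|lra|].
by move=> y y1 y2 /= yz; lra.
Qed.

Lemma snd_closed {R : realType} (K : set R) :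
  closed K -> interior K = set0 -> snd K.
Proof.
move=> cK iK u v uv.
have [z [uz zv nKz]] : exists z, [/\ u < z, z < v & ~ K z].
  apply: contrapT => H.
  have : interior K ((u + v) / 2).
    rewrite /interior /=; apply/nbhs_ballP.
    exists ((v - u) / 2); first by rewrite /=; lra.
    move=> y; rewrite -ball_normE /ball_ /= => hy.
    apply: contrapT => nKy; apply: H; exists y; split => //.
    + move: hy; rewrite ltr_norml => /andP[]; lra.
    + move: hy; rewrite ltr_norml => /andP[]; lra.
  by rewrite iK.
have : nbhs z (~` K) by apply: open_nbhs_nbhs; split => //; exact: closed_openC.
move=> /nbhs_ballP[e /= e0 he].
set r := Num.min (e / 2) (Num.min (z - u) (v - z)).
have e2 : 0 < e / 2 by lra.
have r0 : 0 < r by rewrite /r !lt_min e2 !subr_gt0 uz zv.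
have r1 : r <= e / 2 by rewrite /r ge_min lexx.
have r2 : r <= z - u by rewrite /r !ge_min lexx !orbT.
have r3 : r <= v - z by rewrite /r !ge_min lexx !orbT.
exists (z - r), (z + r); split; [lra|lra|lra|].
move=> y y1 y2; apply: he; rewrite -ball_normE /ball_ /= ltr_norml.
apply/andP; split; lra.
Qed.

Lemma snd_mono {R : realType} (K : set R) (h : R -> R) (p q : R) :
  snd K -> p < q -> {within `[p, q], continuous h} ->
  (forall x y, p <= x -> x < y -> y <= q -> h x < h y) ->
  snd [set y | exists x, [/\ K x, p <= x, x <= q & y = h x]].
Proof.
move=> sK pq ch mono.
have monole : forall x y, p <= x -> x <= y -> y <= q -> h x <= h y.
  move=> x y px xy yq; have [->|nxy] := eqVneq x y; first exact: lexx.
  by apply: ltW; apply: mono => //; rewrite lt_neqAle nxy xy.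
have hpq : h p < h q by apply: mono => //; lra.
move=> u v uv.
have [vp|vp] := leP v (h p).
  exists u, v; split; [exact: lexx|exact: uv|exact: lexx|].
  move=> y uy yv [x [Kx px xq hy]]; rewrite hy in uy yv.
  have := monole p x (lexx _) px xq; lra.
have [qu|qu] := leP (h q) u.
  exists u, v; split; [exact: lexx|exact: uv|exact: lexx|].
  move=> y uy yv [x [Kx px xq hy]]; rewrite hy in uy yv.
  have := monole x q px xq (lexx _); lra.
set u1 := Num.max u (h p).
set v1 := Num.min v (h q).
have u1a : u <= u1 by rewrite /u1 le_max lexx.
have u1b : h p <= u1 by rewrite /u1 le_max lexx orbT.
have v1a : v1 <= v by rewrite /v1 ge_min lexx.
have v1b : v1 <= h q by rewrite /v1 ge_min lexx orbT.
have uv1 : u1 < v1.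
  rewrite /u1 /v1 lt_min !gt_max uv vp qu hpq //.
have ivt : forall y, h p <= y -> y <= h q -> exists x, [/\ p <= x, x <= q & h x = y].
  move=> y y1 y2.
  have [|c] := @IVT R h p q y (ltW pq) ch.
    by rewrite (min_l (ltW hpq)) (max_r (ltW hpq)) y1 y2.
  by rewrite in_itv /= => /andP[c1 c2] hc; exists c.
have [x1 [px1 x1q hx1]] := ivt ((2 * u1 + v1) / 3) ltac:(lra) ltac:(lra).
have [x2 [px2 x2q hx2]] := ivt ((u1 + 2 * v1) / 3) ltac:(lra) ltac:(lra).
have x12 : x1 < x2.
  rewrite ltNge; apply/negP => x21.
  have := monole x2 x1 px2 x21 x1q; lra.
have [z1 [z2 [z1a z12 z2a hz]]] := sK x1 x2 x12.
exists (h z1), (h z2); split.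
- have := monole x1 z1 px1 z1a ltac:(lra); lra.
- by apply: mono => //; lra.
- have := monole z2 x2 ltac:(lra) z2a x2q; lra.
- move=> y y1 y2 [x [Kx px xq hy]].
  apply: (hz x) => //.
  + rewrite ltNge; apply/negP => xz1.
    have := monole x z1 px xz1 ltac:(lra); lra.
  + rewrite ltNge; apply/negP => xz2.
    have := monole z2 x ltac:(lra) xz2 xq; lra.
Qed.

Definition cov {R : realType} (g : R -> R) (K : set R) (eta p q : R) : Prop :=
  exists F : set R, snd F /\ exists s : seq (R * R),
    [/\ all (fun i => i.1 <= i.2) s, \sum_(i <- s) (i.2 - i.1) <= 2 * eta * (q - p) &
    forall x, K x -> p <= x -> x <= q -> F (g x) \/ has (fun i => (i.1 <= g x) && (g x <= i.2)) s].

Lemma within_sub {R : realType} {a b p q : R} {g : R -> R} :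
  a <= p -> q <= b -> {within `[a, b], continuous g} -> {within `[p, q], continuous g}.
Proof.
move=> ap qb; apply: continuous_subspaceW => y /=.
rewrite !in_itv /= => /andP[h1 h2]; apply/andP; split; lra.
Qed.

Lemma within_opp {R : realType} (A : set R) (g : R -> R) :
  {within A, continuous g} -> {within A, continuous (fun x => - g x)}.
Proof. by move=> cg x; apply: continuousN; exact: cg. Qed.

Lemma cov_point {R : realType} (g : R -> R) (K : set R) (eta p : R) :
  cov g K eta p p.
Proof.
exists set0; split; first exact: snd0.
exists [:: (g p, g p)]; split.
  by rewrite /= lexx.
  by rewrite big_seq1 /= !subrr mulr0.
move=> x _ px xp; right; have -> : x = p by apply/eqP; rewrite eq_le xp px.
by rewrite /= lexx.
Qed.

Lemma cov_cat {R : realType} (g : R -> R) (K : set R) (eta p q r : R) :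
  cov g K eta p q -> cov g K eta q r -> cov g K eta p r.
Proof.
move=> [F1 [s1 [t1 [A1 S1 H1]]]] [F2 [s2 [t2 [A2 S2 H2]]]].
exists (F1 `|` F2); split; first exact: sndU.
exists (t1 ++ t2); split.
  by rewrite all_cat A1 A2.
  rewrite big_cat /=; lra.
move=> x Kx px xr.
have [xq|xq] := leP x q.
- by case: (H1 x Kx px xq) => h; [left; left|right; rewrite has_cat h].
- by case: (H2 x Kx (ltW xq) xr) => h; [left; right|right; rewrite has_cat h orbT].
Qed.

Lemma piece {R : realType} (a b : R) (g : R -> R) (K : set R) (eta p q : R) :
  snd K -> 0 < eta -> a <= p -> p <= q -> q <= b ->
  {within `[a, b], continuous g} -> good g eta p q -> cov g K eta p q.
Proof.
move=> sK e0 ap pq qb cg gd.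
have [<-|npq] := eqVneq p q; first exact: cov_point.
have {}pq : p < q by rewrite lt_neqAle npq pq.
have cg' := within_sub ap qb cg.
case: gd => [inc|[dec|lip]].
- exists [set y | exists x, [/\ K x, p <= x, x <= q & y = g x]]; split.
    exact: snd_mono.
  exists [::]; split => //; first by rewrite big_nil; apply: mulr_ge0; [apply: mulr_ge0|]; lra.
  by move=> x Kx px xq; left; exists x.
- exists [set y | exists x, [/\ K x, p <= x, x <= q & y = g x]]; split.
    have decN : forall x y, p <= x -> x < y -> y <= q -> - g x < - g y.
      by move=> x y px xy yq; rewrite ltrN2; apply: dec.
    have H := sndN _ (snd_mono K (fun x => - g x) p q sK pq (within_opp _ _ cg') decN).
    apply: (sndS _ _ _ H).
    by move=> y [x [Kx px xq ->]]; exists x; split => //; rewrite opprK.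
  exists [::]; split => //; first by rewrite big_nil; apply: mulr_ge0; [apply: mulr_ge0|]; lra.
  by move=> x Kx px xq; left; exists x.
- exists set0; split; first exact: snd0.
  exists [:: (g p - eta * (q - p), g p + eta * (q - p))]; split.
    rewrite /= andbT; have : 0 <= eta * (q - p) by apply: mulr_ge0; lra.
    lra.
    by rewrite big_seq1 /=; lra.
  move=> x Kx px xq; right; rewrite /= orbF.
  have [<-|npx] := eqVneq p x.
    have : 0 <= eta * (q - p) by apply: mulr_ge0; lra.
    by move=> h; apply/andP; split; lra.
  have {}px : p < x by rewrite lt_neqAle npx px.
  have := lip p x (lexx _) px xq; rewrite ler_norml => /andP[h1 h2].
  have : eta * (x - p) <= eta * (q - p) by rewrite ler_pM2l //; lra.
  by move=> h; apply/andP; split; lra.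
Qed.

Lemma cov_all {R : realType} (a b c d : R) (g : R -> R) (K : set R) (eta : R) :
  snd K -> 0 < eta -> a < c -> c <= d -> d < b -> DC_on `]a, b[ g ->
  {within `[a, b], continuous g} -> cov g K eta c d.
Proof.
move=> sK e0 ac cd db dc cg.
set A := [set t | [/\ c <= t, t <= d & cov g K eta c t]].
have Ac : A c by split; [exact: lexx|exact: cd|exact: cov_point].
have hA : has_sup A by split; [exists c | exists d => t [] ].
set s := sup A.
have cs : c <= s by exact: (sup_upper_bound hA Ac).
have sd : s <= d by apply: ge_sup; [exists c|move=> t []].
have [del [d0 sdel sdelb loc]] := dc_local a b g s eta dc ltac:(lra) ltac:(lra) e0.
have [t [ct td covt] st] := sup_adherent d0 hA.
have {}st : s - del < t by exact: st.
have ts : t <= s by exact: (sup_upper_bound hA (And3 ct td covt)).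
set s' := Num.min (s + del) d.
have s'1 : s' <= s + del by rewrite /s' ge_min lexx.
have s'2 : s' <= d by rewrite /s' ge_min lexx orbT.
have s'3 : s <= s' by rewrite /s' le_min sd andbT; lra.
have c1 : cov g K eta t s.
  apply: (piece a b) => //; try lra.
  by apply: loc; left; split; lra.
have c2 : cov g K eta s s'.
  apply: (piece a b) => //; try lra.
  by apply: loc; right; split; lra.
have As' : A s' by split; [lra|lra|apply: (cov_cat _ _ _ _ _ _ covt); exact: (cov_cat _ _ _ _ _ _ c1 c2)].
have s's : s' <= s by exact: (sup_upper_bound hA As').
have [sdd|sdd] := leP (s + del) d.
  by move: s's; rewrite /s' (min_l sdd); lra.
by move: As'; rewrite /s' (min_r (ltW sdd)) => -[].
Qed.

Lemma cover_len {R : realType} (n : nat) : forall (s : seq (R * R)) (u v : R),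
  (size s <= n)%N -> all (fun i => i.1 <= i.2) s -> u <= v ->
  (forall y, u <= y -> y <= v -> has (fun i => (i.1 <= y) && (y <= i.2)) s) ->
  v - u <= \sum_(i <- s) (i.2 - i.1).
Proof.
elim: n => [|n IH] s u v.
  rewrite leqn0 => /nilP -> _ uv H.
  by have := H u (lexx _) uv.
move=> sn alls uv H.
have /hasP[j js /andP[j1 j2]] := H v uv (lexx _).
have pj := perm_to_rem js.
rewrite (perm_big _ pj) big_cons /=.
have allr : all (fun i => i.1 <= i.2) (rem j s).
  by move: alls; rewrite (perm_all _ pj) /= => /andP[].
have sr0 : 0 <= \sum_(i <- rem j s) (i.2 - i.1).
  rewrite big_seq; apply: sumr_ge0 => i ir.
  by move/allP: allr => /(_ i ir); rewrite subr_ge0.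
have [ju|uj] := leP j.1 u.
  lra.
suff : j.1 - u <= \sum_(i <- rem j s) (i.2 - i.1) by lra.
rewrite leNgt; apply/negP => hlt.
set S := \sum_(i <- rem j s) (i.2 - i.1) in sr0 hlt.
set w := u + (S + (j.1 - u)) / 2.
have := IH (rem j s) u w.
have szr : (size (rem j s) <= n)%N by rewrite (size_rem js); move: sn; case: (size s).
move=> /(_ szr allr) /(_ ltac:(rewrite /w; lra)).
have cov : forall y, u <= y -> y <= w -> has (fun i => (i.1 <= y) && (y <= i.2)) (rem j s).
  move=> y uy yw.
  have := H y uy ltac:(rewrite /w in yw; lra).
  rewrite (perm_has _ pj) /= => /orP[/andP[h1 h2]|//].
  by rewrite /w in yw; lra.
move=> /(_ cov); rewrite -/S /w; lra.
Qed.

Lemma within_eps {R : realType} (A : set R) (f : R -> R) (x : R) :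
  {within A, continuous f} -> A x -> forall e, 0 < e ->
  exists2 d, 0 < d & forall y, A y -> `|x - y| < d -> `|f x - f y| < e.
Proof.
move=> cf Ax e e0.
have := (proj1 (subspace_continuousP _ _) cf x Ax).
move=> /cvgr_dist_lt /(_ e e0).
rewrite near_withinE => /nbhs_ballP[d /= d0 H].
exists d => // y Ay xy; apply: H => //.
Qed.

Lemma uncovered_nbhs {R : realType} (s : seq (R * R)) (y : R) :
  ~~ has (fun i => (i.1 <= y) && (y <= i.2)) s ->
  exists2 r, 0 < r & forall z, `|z - y| < r -> ~~ has (fun i => (i.1 <= z) && (z <= i.2)) s.
Proof.
elim: s => [|i s IH] /=.
  by move=> _; exists 1 => // z _.
rewrite negb_or => /andP[ni /IH[r r0 Hr]].
have [r1 [r10 Hr1]] : exists r1, 0 < r1 /\ forall z, `|z - y| < r1 -> ~~ ((i.1 <= z) && (z <= i.2)).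
  have [y1|y1] := ltP y i.1.
    exists (i.1 - y); split; first lra.
    move=> z; rewrite ltr_norml => /andP[h1 h2]; rewrite negb_and -!ltNge; apply/orP; left; lra.
  have y2 : i.2 < y by move: ni; rewrite y1 /= -ltNge.
  exists (y - i.2); split; first lra.
  move=> z; rewrite ltr_norml => /andP[h1 h2]; rewrite negb_and -!ltNge; apply/orP; right; lra.
exists (Num.min r r1); first by rewrite lt_min r0 r10.
move=> z; rewrite lt_min => /andP[z1 z2].
by rewrite negb_or Hr1 // Hr.
Qed.

Theorem proposition2p15 (R : realType) (a b : R) (g : R -> R) (P : set R) :
  {within `[a, b], continuous g} ->
  DC_on `]a, b[ g ->
  P `<=` `[a, b] ->
  nowhere_dense P ->
  nowhere_dense (g @` P).
Proof.
move=> cg dc PI nP.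
rewrite /nowhere_dense; apply/seteqP; split => [y0 Hy0|y0 []].
set C := closure (g @` P) in Hy0.
move: Hy0 => /nbhs_ballP[e /= e0 he].
have inC : forall y, y0 - e / 2 < y -> y < y0 + e / 2 -> C y.
  move=> y h1 h2; apply: he; rewrite -ball_normE /ball_ /= ltr_norml.
  apply/andP; split; lra.
have meet : forall u v, y0 - e / 2 <= u -> u < v -> v <= y0 + e / 2 ->
    exists x, [/\ P x, u < g x & g x < v].
  move=> u v h1 uv h2.
  have Cm : C ((u + v) / 2) by apply: inC; lra.
  have := Cm (ball ((u + v) / 2) ((v - u) / 2)).
  case.
    by apply/nbhs_ballP; exists ((v - u) / 2) => //=; lra.
  move=> y [[x Px gxy] By]; exists x; split => //; move: By;
    rewrite -ball_normE /ball_ /= ltr_norml gxy => /andP[k1 k2]; lra.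
set K := closure P.
have sK : snd K := snd_closed K (@closed_closure _ P) nP.
have [u1 [v1 [hu1 huv1 hv1 av1]]] :=
  sndU _ _ (snd1 (g a)) (snd1 (g b)) (y0 - e / 2) (y0 + e / 2) ltac:(lra).
set r := (v1 - u1) / 3.
have r0 : 0 < r by rewrite /r; lra.
have hr : v1 - u1 = 3 * r by rewrite /r; field.
have farz : forall z, (z = g a \/ z = g b) -> forall y, u1 + r <= y -> y <= v1 - r -> r <= `|y - z|.
  move=> z hz y h1 h2.
  have nz : ~ (u1 < z /\ z < v1).
    move=> [k1 k2]; apply: (av1 z k1 k2); case: hz => ->; [left|right]; done.
  have [zu|zu] := leP z u1.
    rewrite ger0_norm; [rewrite /r in h1 *; lra|lra].
  have vz : v1 <= z by rewrite leNgt; apply/negP => k; apply: nz.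
  rewrite ler0_norm; [rewrite /r in h2 *; lra|lra].
have [ab|ba] := ltP a b; last first.
  have [x [Px k1 k2]] := meet (u1 + r) (v1 - r) ltac:(lra) ltac:(rewrite /r; lra) ltac:(lra).
  have := PI x Px; rewrite /= in_itv /= => /andP[ax xb].
  have xa : x = a by apply/eqP; rewrite eq_le; apply/andP; split; lra.
  have := farz (g a) (or_introl erefl) (g x) ltac:(lra) ltac:(lra).
  by rewrite xa subrr normr0; lra.
have aI : a \in `[a, b] by rewrite in_itv /= lexx ltW.
have bI : b \in `[a, b] by rewrite in_itv /= lexx ltW.
have [da da0 Ha] := within_eps _ _ _ cg aI r r0.
have [db db0 Hb] := within_eps _ _ _ cg bI r r0.
set c := a + Num.min (da / 2) ((b - a) / 3).
set d := b - Num.min (db / 2) ((b - a) / 3).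
have ca1 : Num.min (da / 2) ((b - a) / 3) <= da / 2 by rewrite ge_min lexx.
have ca2 : Num.min (da / 2) ((b - a) / 3) <= (b - a) / 3 by rewrite ge_min lexx orbT.
have ca3 : 0 < Num.min (da / 2) ((b - a) / 3) by rewrite lt_min; apply/andP; split; lra.
have cb1 : Num.min (db / 2) ((b - a) / 3) <= db / 2 by rewrite ge_min lexx.
have cb2 : Num.min (db / 2) ((b - a) / 3) <= (b - a) / 3 by rewrite ge_min lexx orbT.
have cb3 : 0 < Num.min (db / 2) ((b - a) / 3) by rewrite lt_min; apply/andP; split; lra.
have ac : a < c by rewrite /c; lra.
have cd : c <= d by rewrite /c /d; lra.
have db' : d < b by rewrite /d; lra.
have loc : forall x, P x -> u1 + r <= g x -> g x <= v1 - r -> c <= x /\ x <= d.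
  move=> x Px k1 k2.
  have := PI x Px; rewrite /= in_itv /= => /andP[ax xb].
  have xI : x \in `[a, b] by rewrite in_itv /= ax xb.
  split.
  - rewrite leNgt; apply/negP => xc.
    have := Ha x xI; rewrite ler0_norm; last lra.
    move=> /(_ ltac:(rewrite /c in xc; lra)).
    have := farz (g a) (or_introl erefl) (g x) k1 k2.
    by rewrite distrC; lra.
  - rewrite leNgt; apply/negP => xd.
    have := Hb x xI; rewrite ger0_norm; last lra.
    move=> /(_ ltac:(rewrite /d in xd; lra)).
    have := farz (g b) (or_intror erefl) (g x) k1 k2.
    by rewrite distrC; lra.
set eta := r / (4 * (d - c + 1)).
have eta0 : 0 < eta by rewrite /eta; apply: divr_gt0 => //; lra.
have etab : 2 * eta * (d - c) < r / 2.
  have : eta * (4 * (d - c + 1)) = r by rewrite /eta; field; lra.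
  nra.
have [F [sF [s [alls sums covs]]]] := cov_all a b c d g K eta sK eta0 ac cd db' dc cg.
set u3 := u1 + r + r / 4.
set v3 := v1 - r - r / 4.
have [ys [ys1 ys2 nys]] : exists ys, [/\ u3 <= ys, ys <= v3 &
    ~~ has (fun i => (i.1 <= ys) && (ys <= i.2)) s].
  apply: contrapT => H.
  have := cover_len (size s) s u3 v3 (leqnn _) alls ltac:(rewrite /u3 /v3 /r; lra).
  have : forall y, u3 <= y -> y <= v3 -> has (fun i => (i.1 <= y) && (y <= i.2)) s.
    move=> y k1 k2; apply: contrapT => /negP k3; apply: H; exists y; split => //.
  move=> hh /(_ hh); rewrite /u3 /v3; lra.
have [rho rho0 Hrho] := uncovered_nbhs s ys nys.
set rho' := Num.min rho (r / 4).
have rr1 : rho' <= rho by rewrite /rho' ge_min lexx.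
have rr2 : rho' <= r / 4 by rewrite /rho' ge_min lexx orbT.
have rr0 : 0 < rho' by rewrite /rho' lt_min rho0 /=; lra.
have [u4 [v4 [h41 h42 h43 h44]]] := sF (ys - rho') (ys + rho') ltac:(lra).
have [x [Px gx1 gx2]] := meet u4 v4 ltac:(rewrite /u3 in ys1; lra) h42 ltac:(rewrite /v3 in ys2; lra).
have [xc xd] := loc x Px ltac:(rewrite /u3 in ys1; lra) ltac:(rewrite /v3 in ys2; lra).
have Kx : K x by exact: subset_closure.
case: (covs x Kx xc xd) => [Fx|hx].
  exact: (h44 (g x) gx1 gx2 Fx).
have := Hrho (g x); rewrite hx => /(_ _) /negP; apply.
rewrite ltr_norml; apply/andP; split; lra.
done.
Qed.
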